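(* Consider an ordered linear probing hash table with $n$ slots in some initial state (containing keys and free slots), and a sequence $S$ of insertions and deletions applied to it. For each $s\in[n]$, there exists an interval $P=[r,s-1]$ whose insertion surplus is at least the crossing number $c_s$.
   Context: Ordered linear probing with tombstones: the table has slots $1,\dots,n$ (treated as linearly ordered); each slot holds a key, a tombstone, or is free. A hash function $h$ maps keys to $[n]$; the hash of a tombstone is the hash of the key whose deletion created it. A run is a maximal contiguous sequence of non-free slots; keys and tombstones within each run are stored in order of hash. Deletion of a key replaces it by a tombstone. Insertion of $u$ scans positions $h(u),h(u)+1,\dots$ to find the position $j$ where $u$ belongs in hash order, places $u$ there, and shifts the contents of positions $j,j+1,\dots$ right by one until reaching a tombstone or free slot, which the insertion is said to use (it is overwritten). The peak $p_u$ of an insertion $u$ is the hash of the tombstone it uses, or the position of the free slot it uses. The crossing number $c_i$ is the number of insertions in $S$ with hash smaller than $i$ that either use a tombstone whose hash is at least $i$, or use a free slot in a position at least $i$. A subset $S'\subseteq S_P=\{u\in S:h(u)\in P\}$ is downward-closed if for every $u\in S'$, every $v\in S_P$ occurring temporally before $u$ with $h(v)\ge h(u)$ is in $S'$; its insertion surplus is $\max(0,\ \#\text{insertions in }S' - \#\text{deletions in }S')$. The insertion surplus of an interval $P\subseteq[n]$ is the maximum insertion surplus of a downward-closed subset of $S_P$, minus the number of free slots initially in $P$. *)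

(* Defs.v *)
From mathcomp Require Import all_boot all_order all_algebra.
Set Implicit Arguments. Unset Strict Implicit. Unset Printing Implicit Defensive.
Import Order.TTheory GRing.Theory Num.Theory.

(* Content of a slot: free, a key, or a tombstone (carrying its hash, i.e. the
   hash of the key whose deletion created it). *)
Inductive cell (K : Type) := Free | Key of K | Tomb of nat.
Arguments Free {K}. Arguments Key {K}. Arguments Tomb {K}.
Inductive op (K : Type) := Ins of K | Del of K.
Arguments Ins {K}. Arguments Del {K}.
(* What an insertion uses: a free slot at some position, or a tombstone with
   some hash. *)
Inductive use := UFree of nat | UTomb of nat.

Local Open Scope nat_scope.
Section OLP.
Variables (K : eqType) (n : nat) (h : K -> nat).

(* A table state: slot x (1 <= x <= n) holds [sigma x]; other values unused. *)
Definition state := nat -> cell K.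

Definition is_free (c : cell K) : bool := if c is Free then true else false.
Definition is_tomb (c : cell K) : bool := if c is Tomb _ then true else false.
Definition is_key_of (c : cell K) (u : K) : bool :=
  if c is Key k then k == u else false.
Definition cell_hash (c : cell K) : nat :=
  match c with Key k => h k | Tomb p => p | Free => 0 end.

Definition op_key (o : op K) : K := match o with Ins u => u | Del u => u end.
Definition op_hash (o : op K) : nat := h (op_key o).
Definition is_ins (o : op K) : bool := if o is Ins _ then true else false.

Definition find_first (P : pred nat) (a b : nat) : option nat :=
  if [seq x <- iota a (b.+1 - a) | P x] is x :: _ then Some x else None.

(* Insertion of u: the position j where u belongs in hash order is the first
   position >= h u that is free or holds an item of hash >= h u; u is placed
   at j and the contents of j, j+1, ... are shifted right by one up to the
   first tombstone or free slot k (which is used / overwritten). *)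
Definition insert (sigma : state) (u : K) : option (state * use) :=
  if has (fun x => is_key_of (sigma x) u) (iota 1 n) then None else
  match find_first (fun x => is_free (sigma x) || (h u <= cell_hash (sigma x)))
                   (h u) n with
  | None => None
  | Some j =>
    match find_first (fun x => is_free (sigma x) || is_tomb (sigma x)) j n with
    | None => None
    | Some k =>
      let sigma' := fun x => if x == j then Key u
                             else if (j < x <= k) then sigma x.-1 else sigma x in
      let us := if sigma k is Tomb p then UTomb p else UFree k in
      Some (sigma', us)
    end
  end.

Definition delete (sigma : state) (u : K) : option state :=
  match find_first (fun x => is_key_of (sigma x) u) 1 n with
  | None => None
  | Some j => Some (fun x => if x == j then Tomb (h u) else sigma x)
  end.

Fixpoint run (sigma : state) (S : seq (op K)) : option (seq (option use)) :=
  match S with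
  | [::] => Some [::]
  | Ins u :: S' =>
    match insert sigma u with
    | Some (sigma', us) => omap (cons (Some us)) (run sigma' S')
    | None => None
    end
  | Del u :: S' =>
    match delete sigma u with
    | Some sigma' => omap (cons None) (run sigma' S')
    | None => None
    end
  end.

Definition valid_initial (sigma : state) : Prop :=
  [/\ (forall x, 1 <= x <= n -> ~~ is_tomb (sigma x)),
      (forall x y k, 1 <= x <= n -> 1 <= y <= n ->
          sigma x = Key k -> sigma y = Key k -> x = y),
      (forall x k, 1 <= x <= n -> sigma x = Key k ->
          h k <= x /\ (forall y, h k <= y <= x -> ~~ is_free (sigma y)))
    & (forall x, 1 <= x < n -> ~~ is_free (sigma x) -> ~~ is_free (sigma x.+1) ->
          cell_hash (sigma x) <= cell_hash (sigma x.+1))].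

Definition crossing_number (S : seq (op K)) (tr : seq (option use)) (i : nat)
  : nat :=
  count (fun p : op K * option use =>
           match p with
           | (Ins u, Some (UFree k)) => (h u < i) && (i <= k)
           | (Ins u, Some (UTomb q)) => (h u < i) && (i <= q)
           | _ => false
           end) (zip S tr).

Section Surplus.
Variable S : seq (op K).
(* operations of S are identified with their (temporal) index *)
Definition opi (t : 'I_(size S)) : op K := tnth (in_tuple S) t.

Definition S_P (lo hi : nat) : {set 'I_(size S)} :=
  [set t | lo <= op_hash (opi t) <= hi].

Definition downward_closed (lo hi : nat) (A : {set 'I_(size S)}) : bool :=
  (A \subset S_P lo hi) &&
  [forall t in A, forall v in S_P lo hi,
     ((v < t)%N && (op_hash (opi t) <= op_hash (opi v))) ==> (v \in A)].

Definition set_surplus (A : {set 'I_(size S)}) : nat :=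
  maxn 0 (#|[set t in A | is_ins (opi t)]| - #|[set t in A | ~~ is_ins (opi t)]|).

Definition max_surplus (lo hi : nat) : nat :=
  \max_(A : {set 'I_(size S)} | downward_closed lo hi A) set_surplus A.

Definition insertion_surplus (sigma0 : state) (lo hi : nat) : int :=
  (max_surplus lo hi)%:Z
  - (count (fun x => is_free (sigma0 x)) (iota lo (hi.+1 - lo)))%:Z.
End Surplus.
End OLP.

(* Main.v *)
Require Import Defs.
From mathcomp Require Import all_boot all_order all_algebra.
Import Order.TTheory GRing.Theory Num.Theory.
From mathcomp Require Import zify ring.
Set Implicit Arguments. Unset Strict Implicit. Unset Printing Implicit Defensive.
Local Open Scope nat_scope.

Lemma find_firstP (P : pred nat) a b x : find_first P a b = Some x ->
  [/\ a <= x <= b, P x & forall y, a <= y < x -> ~~ P y].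
Proof.
rewrite /find_first.
case E: [seq y <- iota a (b.+1 - a) | P y] => [|y s] //= [<-].
have Hy : y \in [seq y <- iota a (b.+1 - a) | P y] by rewrite E inE eqxx.
move: Hy; rewrite mem_filter mem_iota => /andP[Py /andP[H1 H2]].
split => //.
  apply/andP; split => //. lia.
move=> z /andP[Hz1 Hz2]; apply/negP => Pz.
have Hs : sorted ltn (y :: s).
  by rewrite -E; apply: sorted_filter; [exact: ltn_trans| exact: iota_ltn_sorted].
have Hz : z \in y :: s by rewrite -E mem_filter Pz mem_iota; apply/andP; split; lia.
move: Hz; rewrite inE => /orP[/eqP Hzy|Hzs]; first lia.
have := order_path_min ltn_trans Hs => /allP /(_ _ Hzs). lia.
Qed.
Section St.
Variables (K : eqType) (n : nat) (h : K -> nat).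
Hypothesis hr : forall k, 1 <= h k <= n.

Local Notation ch := (cell_hash h).
Local Notation nf c := (~~ is_free c).

Definition Inv (sg : state K) : Prop :=
 (forall p, 1 <= p <= n -> nf (sg p) ->
    1 <= ch (sg p) <= p /\ forall y, ch (sg p) <= y <= p -> nf (sg y)) /\
 (forall x, 1 <= x < n -> nf (sg x) -> nf (sg x.+1) -> ch (sg x) <= ch (sg x.+1)).

Lemma chain sg x z : Inv sg -> 1 <= x -> x <= z -> z <= n ->
  (forall y, x <= y <= z -> nf (sg y)) -> ch (sg x) <= ch (sg z).
Proof.
move=> [_ I2] Hx; elim: z => [|z IH] Hxz Hzn Hnf; first lia.
case: (ltngtP x z.+1) => H; [|lia|by rewrite H].
apply: leq_trans (IH _ _ _) (I2 _ _ _ _) => //; try lia.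
- by move=> y Hy; apply: Hnf; lia.
- by apply: Hnf; lia.
- by apply: Hnf; lia.
Qed.

Definition ins_data (sg : state K) w j k (sg' : state K) :=
  [/\ h w <= j <= k, k <= n,
      (forall y, h w <= y < j -> nf (sg y) && (ch (sg y) < h w)),
      is_free (sg j) || (h w <= ch (sg j)) &
      [/\ (forall y, j <= y < k -> nf (sg y) && ~~ is_tomb (sg y)),
      is_free (sg k) || is_tomb (sg k) &
      (forall x, sg' x = if x == j then Key w else if j < x <= k then sg x.-1 else sg x)]].

Lemma insert_spec sg w sg' U : insert n h sg w = Some (sg', U) ->
  exists j k, ins_data sg w j k sg' /\ U = if sg k is Tomb p then UTomb p else UFree k.
Proof.
rewrite /insert; case: has => //.
case Ej: find_first => [j|] //; case Ek: find_first => [k|] // [<- <-].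
move/find_firstP: Ej => [Hj Pj Nj]; move/find_firstP: Ek => [Hk Pk Nk].
exists j, k; split => //; split => //; try lia; last split => //.
- move=> y Hy; have := Nj y; rewrite negb_or -ltnNge; apply; lia.
- move=> y Hy; have := Nk y; rewrite negb_or; apply; lia.
Qed.

Lemma delete_spec sg u sg' : delete n h sg u = Some sg' ->
  exists j, [/\ 1 <= j <= n, sg j = Key u &
    forall x, sg' x = if x == j then Tomb (h u) else sg x].
Proof.
rewrite /delete; case Ej: find_first => [j|] // [<-].
move/find_firstP: Ej => [Hj Pj _]; exists j; split => //.
by move: Pj; rewrite /is_key_of; case: (sg j) => // k /eqP ->.
Qed.

End St.
Section Inv2.
Variables (K : eqType) (n : nat) (h : K -> nat).
Hypothesis hr : forall k, 1 <= h k <= n.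
Local Notation ch := (cell_hash h).
Local Notation nf c := (~~ is_free c).

Lemma ins_nf sg w j k sg' : ins_data n h sg w j k sg' ->
  forall p, nf (sg' p) = nf (sg p) || (p == k).
Proof.
move=> [Hjk Hkn Hpre Pj [Hmid Pk Hsg]] p.
rewrite Hsg; case: (eqVneq p j) => [->|Hpj] /=.
  case: (eqVneq j k) => [->|Hjk']; first by rewrite orbT.
  by have /andP[-> _] := Hmid j (ltac:(lia)).
case: ifP => Hp.
  have /andP[-> _] := Hmid p.-1 (ltac:(lia)).
  case: (eqVneq p k) => [->|Hpk]; rewrite ?orbT //.
  by have /andP[-> _] := Hmid p (ltac:(lia)).
case: (eqVneq p k) => [Hpk|]; last by rewrite orbF.
exfalso; move: Hp; rewrite Hpk; lia.
Qed.

Lemma Inv_ins sg w j k sg' : Inv n h sg -> ins_data n h sg w j k sg' -> Inv n h sg'.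
Proof.
move=> [I1 I2] D; have Hnf := ins_nf D.
move: D => [Hjk Hkn Hpre Pj [Hmid Pk Hsg]].
have hw := hr w.
have mono : forall y, nf (sg y) -> nf (sg' y) by move=> y Hy; rewrite Hnf Hy.
split.
- move=> p Hp Hnfp.
  case: (eqVneq p j) => [Epj|Hpj].
    rewrite Hsg Epj eqxx /=; split; first lia.
    move=> y Hy; case: (eqVneq y j) => [->|Hyj]; first by rewrite -Epj.
    by apply: mono; have /andP[] := Hpre y (ltac:(lia)).
  have [Hin|Hout] := boolP (j < p <= k).
    have E : sg' p = sg p.-1 by rewrite Hsg (negbTE Hpj) Hin.
    have /andP[Hn1 _] := Hmid p.-1 (ltac:(lia)).
    have [Ha Hb] := I1 p.-1 (ltac:(lia)) Hn1.
    rewrite E; split; first lia.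
    move=> y Hy; case: (eqVneq y p) => [->|Hyp]; first by [].
    apply: mono; apply: Hb; lia.
  have E : sg' p = sg p by rewrite Hsg (negbTE Hpj) (negbTE Hout).
  have Hpk : p != k by apply/eqP => Epk; move: Hout; rewrite Epk; lia.
  move: Hnfp; rewrite Hnf (negbTE Hpk) orbF => Hnfp.
  have [Ha Hb] := I1 p Hp Hnfp.
  rewrite E; split => // y Hy; apply: mono; exact: Hb.
- move=> x Hx Hn1 Hn2.
  have Hsgx : forall p, sg' p = if p == j then Key w else if j < p <= k then sg p.-1 else sg p := Hsg.
  case: (ltngtP x.+1 j) => Hxj.
  + (* x+1 < j : both outside *)
    rewrite !Hsg ifN_eq ?ifN_eq; try lia.
    rewrite !ifF; try lia.
    have Hxk : x != k by lia.
    have Hxk1 : x.+1 != k by lia.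
    move: Hn1 Hn2; rewrite !Hnf (negbTE Hxk) (negbTE Hxk1) !orbF => Hn1 Hn2.
    exact: I2.
  +
    case: (eqVneq x j) => [Exj|Hxj'].
    *
      case: (ltnP j k) => Hjk2.
      -- rewrite Hsg Exj eqxx Hsg ifN_eq; last lia.
         rewrite ifT /=; last lia.
         have /andP[Hnj _] := Hmid j (ltac:(lia)).
         by move: Pj; rewrite (negbTE Hnj).
      -- have Ekj : k = j by lia.
         rewrite Hsg Exj eqxx Hsg ifN_eq; last lia.
         rewrite ifF; last lia.
         have Hn2' : nf (sg k.+1).
           by move: Hn2; rewrite Hnf Exj -Ekj (_ : (k.+1 == k) = false) ?orbF //; lia.
         rewrite /= -Ekj.
         case/orP: Pk => Hk.
         ++ have [Ha Hb] := I1 k.+1 (ltac:(lia)) Hn2'.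
            case: (leqP (ch (sg k.+1)) k) => Hc; last lia.
            by have := Hb k (ltac:(lia)); rewrite Hk.
         ++ have Hnk : nf (sg k) by move: Hk; case: (sg k).
            move: Pj; rewrite -Ekj (negbTE Hnk) /= => Pj.
            apply: leq_trans Pj _; apply: I2 => //; lia.
    *
      have Hxj2 : j < x by lia.
      case: (ltnP x k) => Hxk.
      -- (* j < x < k: both in middle *)
         rewrite !Hsg (negbTE Hxj') ifN_eq; last lia.
         rewrite !ifT; try lia.
         have /andP[Ha _] := Hmid x.-1 (ltac:(lia)).
         have /andP[Hb _] := Hmid x (ltac:(lia)).
         have -> : x.+1.-1 = x by [].
         have := I2 x.-1 (ltac:(lia)) Ha; rewrite prednK; last lia.
         by apply.
      -- case: (eqVneq x k) => [Exk|Hxk'].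
         ++
            rewrite !Hsg (negbTE Hxj') ifN_eq; last lia.
            rewrite ifT; last lia.
            rewrite ifF; last lia.
            have Hn2' : nf (sg k.+1).
              by move: Hn2; rewrite Hnf Exk (_ : (k.+1 == k) = false) ?orbF //; lia.
            have /andP[Hnk1 _] := Hmid k.-1 (ltac:(lia)).
            rewrite Exk.
            case/orP: Pk => Hk.
            ** have [Ha Hb] := I1 k.+1 (ltac:(lia)) Hn2'.
               have [Hc _] := I1 k.-1 (ltac:(lia)) Hnk1.
               case: (leqP (ch (sg k.+1)) k) => Hc2; last lia.
               by have := Hb k (ltac:(lia)); rewrite Hk.
            ** have Hnk : nf (sg k) by move: Hk; case: (sg k).
               have := I2 k.-1 (ltac:(lia)) Hnk1; rewrite prednK; last lia.
               move/(_ Hnk) => H1; apply: leq_trans H1 _; apply: I2 => //; lia.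
         ++
            rewrite !Hsg !ifN_eq; try lia.
            rewrite !ifF; try lia.
            have Hxk1 : x.+1 != k by lia.
            move: Hn1 Hn2; rewrite !Hnf (negbTE Hxk') (negbTE Hxk1) !orbF => Hn1 Hn2.
            exact: I2.
  +
    rewrite !Hsg Hxj eqxx ifN_eq; last lia.
    rewrite ifF; last lia.
    have Hxk : x != k by lia.
    move: Hn1; rewrite Hnf (negbTE Hxk) orbF => Hn1 /=.
    case: (leqP (h w) x) => Hwx.
    * have /andP[_ H] := Hpre x (ltac:(lia)); lia.
    * have [Ha _] := I1 x (ltac:(lia)) Hn1; lia.
Qed.

Lemma Inv_del sg u j sg' : Inv n h sg -> 1 <= j <= n -> sg j = Key u ->
  (forall x, sg' x = if x == j then Tomb (h u) else sg x) -> Inv n h sg'.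
Proof.
move=> [I1 I2] Hj Hsj Hsg.
have Hnf : forall p, nf (sg' p) = nf (sg p).
  by move=> p; rewrite Hsg; case: eqP => // ->; rewrite Hsj.
have Hch : forall p, ch (sg' p) = ch (sg p).
  by move=> p; rewrite Hsg; case: eqP => // ->; rewrite Hsj.
split.
- move=> p Hp; rewrite Hnf Hch => H; have [Ha Hb] := I1 p Hp H.
  by split => // y Hy; rewrite Hnf; apply: Hb.
- by move=> x Hx; rewrite !Hnf !Hch; apply: I2.
Qed.

End Inv2.

Section Count.
Variables (K : eqType) (n : nat) (h : K -> nat).
Hypothesis hr : forall k, 1 <= h k <= n.
Local Notation ch := (cell_hash h).
Local Notation nf c := (~~ is_free c).

Lemma ins_tomb sg w j k sg' q : Inv n h sg -> ins_data n h sg w j k sg' ->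
  sg k = Tomb q -> h w <= q /\ q <= k.
Proof.
move=> HI D Hk; have [I1 I2] := HI.
move: D => [Hjk Hkn Hpre Pj [Hmid Pk Hsg]].
have hw := hr w.
have Hnk : nf (sg k) by rewrite Hk.
have [Ha _] := I1 k (ltac:(lia)) Hnk.
move: Ha; rewrite Hk /= => Ha; split; last lia.
case: (eqVneq j k) => [Ejk|Hjk'].
  by move: Pj; rewrite Ejk Hk.
have /andP[Hnj _] := Hmid j (ltac:(lia)).
move: Pj; rewrite (negbTE Hnj) /= => Pj.
have := chain HI (x:=j) (z:=k) (ltac:(lia)) (ltac:(lia)) Hkn.
rewrite Hk /=; move=> H; apply: leq_trans Pj (H _).
move=> y Hy; case: (eqVneq y k) => [->|Hyk]; first by rewrite Hk.
by have /andP[] := Hmid y (ltac:(lia)).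
Qed.

Lemma ins_cross sg w j k sg' s : Inv n h sg -> ins_data n h sg w j k sg' ->
  h w < s -> (if sg k is Tomb q then s <= q else s <= k) ->
  (forall p, h w <= p < s -> nf (sg' p)) /\
  (forall p, 1 <= p <= n -> is_tomb (sg' p) -> h w <= ch (sg' p) -> s <= ch (sg' p)).
Proof.
move=> HI D Hws Hks; have [I1 I2] := HI.
have Hnf := ins_nf D.
have HD := D.
move: D => [Hjk Hkn Hpre Pj [Hmid Pk Hsg]].
have hw := hr w.
have Hsk : s <= k.
  move: Hks; case E: (sg k) => [|//|q] //.
  have [_ ?] := ins_tomb HI HD E; lia.
split.
- move=> p Hp; rewrite Hnf.
  case: (ltnP p j) => Hpj.
    by have /andP[-> _] := Hpre p (ltac:(lia)).
  case: (eqVneq p k) => [_|Hpk]; first by rewrite orbT.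
  by have /andP[-> _] := Hmid p (ltac:(lia)).
- move=> p Hp Ht Hw; rewrite leqNgt; apply/negP => Hlt.
  move: Ht Hw Hlt; rewrite Hsg.
  case: (eqVneq p j) => [//|Hpj].
  case: ifP => Hin.
    by have /andP[_ /negbTE ->] := Hmid p.-1 (ltac:(lia)).
  move=> Ht Hw Hlt.
  have Hnp : nf (sg p) by move: Ht; case: (sg p).
  have [Ha Hb] := I1 p Hp Hnp.
  case: (ltnP p j) => Hpj2.
    have /andP[_ H] := Hpre p (ltac:(lia)); lia.
  have Hpk : k < p by lia.
  have Hnk : nf (sg k) by apply: Hb; lia.
  move: Pk Hks; case E: (sg k) => [| |q] //; first by rewrite E in Hnk.
  move=> _ Hq.
  have := chain HI (x:=k) (z:=p) (ltac:(lia)) (ltac:(lia)) (ltac:(lia)).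
  rewrite E /=; move=> H.
  have := H (fun y Hy => Hb y (ltac:(lia))); lia.
Qed.

Definition S1 (f : cell K -> nat) (sg : state K) := \sum_(1 <= p < n.+1) f (sg p).

Lemma S1_ins f sg w j k sg' : ins_data n h sg w j k sg' ->
  S1 f sg' + f (sg k) = S1 f sg + f (Key w).
Proof.
move=> [Hjk Hkn Hpre Pj [Hmid Pk Hsg]].
have hw := hr w.
rewrite /S1 !(big_cat_nat (n:=j) (m:=1) (p:=n.+1)); try lia.
rewrite !(big_cat_nat (n:=k.+1) (m:=j) (p:=n.+1)); try lia.
have E1 : \sum_(1 <= i < j) f (sg' i) = \sum_(1 <= i < j) f (sg i).
  apply: eq_big_nat => i Hi; have H1 : (i == j) = false by lia.
  have H2 : (j < i <= k) = false by lia. by rewrite Hsg H1 H2.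
have E3 : \sum_(k.+1 <= i < n.+1) f (sg' i) = \sum_(k.+1 <= i < n.+1) f (sg i).
  apply: eq_big_nat => i Hi; have H1 : (i == j) = false by lia.
  have H2 : (j < i <= k) = false by lia. by rewrite Hsg H1 H2.
rewrite E1 E3 [\sum_(j <= i < k.+1) f (sg' i)]big_ltn; last lia.
rewrite [\sum_(j <= i < k.+1) f (sg i)]big_nat_recr; last lia.
rewrite [sg' j]Hsg eqxx.
have -> : \sum_(j.+1 <= i < k.+1) f (sg' i) = \sum_(j <= i < k) f (sg i).
  rewrite big_add1 /=; apply: eq_big_nat => i Hi.
  have H1 : (i.+1 == j) = false by lia.
  have H2 : (j < i.+1 <= k) = true by lia. by rewrite Hsg H1 H2.
set A := \sum_(1 <= i < j) f (sg i). set B := \sum_(j <= i < k) f (sg i).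
set C := \sum_(k.+1 <= i < n.+1) f (sg i). rewrite /=. lia.
Qed.

Lemma S1_upd f sg j c sg' : 1 <= j <= n ->
  (forall x, sg' x = if x == j then c else sg x) ->
  S1 f sg' + f (sg j) = S1 f sg + f c.
Proof.
move=> Hj Hsg.
rewrite /S1 !(big_cat_nat (n:=j) (m:=1) (p:=n.+1)); try lia.
rewrite [\sum_(j <= i < n.+1) f (sg' i)]big_ltn; last lia.
rewrite [\sum_(j <= i < n.+1) f (sg i)]big_ltn; last lia.
have E1 : \sum_(1 <= i < j) f (sg' i) = \sum_(1 <= i < j) f (sg i).
  apply: eq_big_nat => i Hi; have H1 : (i == j) = false by lia. by rewrite Hsg H1.
have E3 : \sum_(j.+1 <= i < n.+1) f (sg' i) = \sum_(j.+1 <= i < n.+1) f (sg i).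
  apply: eq_big_nat => i Hi; have H1 : (i == j) = false by lia. by rewrite Hsg H1.
rewrite E1 E3 [sg' j]Hsg eqxx.
set A := \sum_(1 <= i < j) f (sg i).
set C := \sum_(j.+1 <= i < n.+1) f (sg i). rewrite /=. lia.
Qed.

Lemma sum_eq1 (F : nat -> nat) a b k :
  \sum_(a <= p < b) ((p == k) * F p) = (a <= k < b) * F k.
Proof.
elim: b => [|b IH]; first by rewrite big_geq // ltn0 andbF.
case: (leqP a b) => Hab; last first.
  rewrite big_geq; last lia.
  by rewrite (_ : (a <= k < b.+1) = false) //; lia.
rewrite big_nat_recr //= IH.
case: (eqVneq b k) => [Ebk|Hbk].
  subst b; rewrite ltnn andbF Hab ltnSn /=; lia.
rewrite mul0n addn0 [k < b.+1]ltnS [k <= b]leq_eqVlt (eq_sym k b) (negbTE Hbk) //.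
Qed.

Definition NFc x (sg : state K) := \sum_(1 <= p < x) nf (sg p).

Lemma NF_ins sg w j k sg' x : ins_data n h sg w j k sg' ->
  NFc x sg' = NFc x sg + (is_free (sg k) && (k < x)).
Proof.
move=> D; have Hnf := ins_nf D.
have hw := hr w.
move: D => [Hjk _ _ _ _].
rewrite /NFc.
have -> : \sum_(1 <= p < x) nf (sg' p) =
          \sum_(1 <= p < x) (nf (sg p) + (p == k) * is_free (sg k)).
  apply: eq_big_nat => p _; rewrite Hnf.
  by case: (eqVneq p k) => [->|]; case: (is_free (sg k)); case: (is_free (sg p)).
rewrite big_split /= sum_eq1.
by case: (is_free (sg k)); case: (leqP 1 k); case: (ltnP k x) => //=; lia.
Qed.

Lemma NF_upd sg j c sg' x :
  (forall y, sg' y = if y == j then c else sg y) -> nf c = nf (sg j) ->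
  NFc x sg' = NFc x sg.
Proof.
move=> Hsg Hc; apply: eq_big_nat => p _; rewrite Hsg.
by case: (eqVneq p j) => [->|] //; rewrite Hc.
Qed.

End Count.


Section Traj.
Variables (K : eqType) (n : nat) (h : K -> nat).
Hypothesis hr : forall k, 1 <= h k <= n.
Local Notation ch := (cell_hash h).
Local Notation nf c := (~~ is_free c).

Definition nstep (sg : state K) (o : op K) : state K :=
  match o with
  | Ins u => if insert n h sg u is Some (sg', _) then sg' else sg
  | Del u => if delete n h sg u is Some sg' then sg' else sg
  end.

Fixpoint sat (sg : state K) (S : seq (op K)) (t : nat) {struct t} : state K :=
  if t is t'.+1 then
    (if S is o :: S' then sat (nstep sg o) S' t' else sg)
  else sg.

Lemma run_info sg S tr : run n h sg S = Some tr ->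
  size tr = size S /\ forall t o0, t < size S ->
  match nth o0 S t with
  | Ins u => exists U, insert n h (sat sg S t) u = Some (sat sg S t.+1, U) /\
                       nth None tr t = Some U
  | Del u => delete n h (sat sg S t) u = Some (sat sg S t.+1) /\ nth None tr t = None
  end.
Proof.
elim: S sg tr => [|o S IH] sg tr /=.
  by move=> [<-]; split => // t o0; rewrite ltn0.
case: o => u.
- case E: insert => [[sg' U]|] //.
  case R: (run n h sg' S) => [tr'|] //= [<-].
  have [Hs Ht] := IH _ _ R.
  split; first by rewrite /= Hs.
  move=> [|t] o0 /= Hlt.
    by rewrite E; exists U; split.
  by rewrite /nstep E; apply: Ht.
- case E: delete => [sg'|] //.
  case R: (run n h sg' S) => [tr'|] //= [<-].
  have [Hs Ht] := IH _ _ R.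
  split; first by rewrite /= Hs.
  move=> [|t] o0 /= Hlt.
    by rewrite E; split.
  by rewrite /nstep E; apply: Ht.
Qed.

End Traj.

Section Main.
Variables (K : eqType) (n : nat) (h : K -> nat).
Hypothesis hr : forall k, 1 <= h k <= n.
Local Notation ch := (cell_hash h).
Local Notation nf c := (~~ is_free c).
Variables (sg0 : state K) (S : seq (op K)) (tr : seq (option use)) (o0 : op K).
Hypothesis Hrun : run n h sg0 S = Some tr.
Hypothesis Hval : valid_initial n h sg0.

Local Notation st t := (sat n h sg0 S t).

Lemma Inv0 : Inv n h sg0.
Proof.
move: Hval => [Hnt _ Hkp Hsort]; split => //.
move=> p Hp Hnf.
case E: (sg0 p) => [|k|q].
- by rewrite E in Hnf.
- have [Ha Hb] := Hkp p k Hp E; have := hr k; rewrite /=; split; first lia.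
  by move=> y Hy; apply: Hb.
- by have := Hnt p Hp; rewrite E.
Qed.

Lemma Inv_t t : t <= size S -> Inv n h (st t).
Proof.
elim: t => [|t IH] Ht; first exact: Inv0.
have HI := IH (ltnW Ht).
have [_ Hi] := run_info Hrun; have := Hi t o0 Ht.
case: (nth o0 S t) => u.
- move=> [U [Hins _]]; have [j [k [D _]]] := insert_spec Hins.
  exact: Inv_ins D.
- move=> [Hdel _]; have [j [Hj Hsj Hsg]] := delete_spec Hdel.
  exact: Inv_del Hj Hsj Hsg.
Qed.

Definition cr x t : bool :=
  match nth o0 S t, nth None tr t with
  | Ins u, Some (UFree k) => (h u < x) && (x <= k)
  | Ins u, Some (UTomb q) => (h u < x) && (x <= q)
  | _, _ => false
  end.

Definition Icnt x sg := S1 n (fun c => nf c && (ch c < x)) sg.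
Definition Y x sg : int := ((Icnt x sg)%:Z - (NFc x sg)%:Z)%R.

Lemma Y_step x t : t < size S -> Y x (st t.+1) = (Y x (st t) + (cr x t)%:Z)%R.
Proof.
move=> Ht; have HI := Inv_t (ltnW Ht).
have [_ Hi] := run_info Hrun; have := Hi t o0 Ht.
rewrite /cr /Y /Icnt; case: (nth o0 S t) => u.
- move=> [U [Hins ->]]; have [j [k [D HU]]] := insert_spec Hins.
  move: HU D HI; move: (st t.+1) (st t) => sg' sg HU D HI.
  have E1 := S1_ins hr (fun c => nf c && (ch c < x)) D.
  have E2 := NF_ins hr x D.
  have HD := D; move: D => [Hjk _ _ _ [_ Pk _]].
  move: E1 E2 HU Pk; case Ek: (sg k) => [|kk|q] //= E1 E2 -> _.
  + move: E1 E2.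
    case: (ltnP (h u) x); case: (leqP x k) => /= H1 H2 E1 E2; lia.
  + have [Hq _] := ins_tomb hr HI HD Ek.
    move: E1 E2.
    case: (ltnP (h u) x); case: (leqP x q); case: (ltnP q x) => /= H1 H2 H3 E1 E2; lia.
- move=> [Hdel _]; have [j [Hj Hsj Hsg]] := delete_spec Hdel.
  move: Hsj Hsg HI; move: (st t.+1) (st t) => sg' sg Hsj Hsg HI.
  have E1 := S1_upd (fun c => nf c && (ch c < x)) Hj Hsg.
  have E2 := NF_upd x Hsg (ltac:(by rewrite Hsj)).
  move: E1; rewrite Hsj /= => E1.
  rewrite E2; lia.
Qed.


Definition cc x T := \sum_(0 <= t < T) cr x t.

Lemma Y_tel x T : T <= size S -> Y x (st T) = (Y x sg0 + (cc x T)%:Z)%R.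
Proof.
elim: T => [|T IH] HT; first by rewrite /cc big_geq //= addr0.
rewrite Y_step // IH; last lia.
rewrite /cc big_nat_recr //= PoszD; lia.
Qed.

Definition Kc a b sg := S1 n (fun c => if c is Key k then (a <= h k < b) else false) sg.
Definition dKi a b t := (a <= op_hash h (nth o0 S t) < b) && is_ins (nth o0 S t).
Definition dKd a b t := (a <= op_hash h (nth o0 S t) < b) && ~~ is_ins (nth o0 S t).

Lemma K_step a b t : t < size S ->
  Kc a b (st t.+1) + dKd a b t = Kc a b (st t) + dKi a b t.
Proof.
move=> Ht.
have [_ Hi] := run_info Hrun; have := Hi t o0 Ht.
rewrite /dKi /dKd /op_hash; case: (nth o0 S t) => u /=.
- move=> [U [Hins _]]; have [j [k [D HU]]] := insert_spec Hins.
  move: D; move: (st t.+1) (st t) => sg' sg D.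
  have E1 := S1_ins hr (fun c => if c is Key k then (a <= h k < b) else false) D.
  move: D => [_ _ _ _ [_ Pk _]].
  move: E1 Pk; rewrite /Kc; case: (sg k) => [|kk|q] //= E1 _; lia.
- move=> [Hdel _]; have [j [Hj Hsj Hsg]] := delete_spec Hdel.
  move: Hsj Hsg; move: (st t.+1) (st t) => sg' sg Hsj Hsg.
  have E1 := S1_upd (fun c => if c is Key k then (a <= h k < b) else false) Hj Hsg.
  move: E1; rewrite /Kc Hsj /=; lia.
Qed.

Lemma K_tel a b T : T <= size S ->
  Kc a b (st T) + \sum_(0 <= t < T) dKd a b t = Kc a b sg0 + \sum_(0 <= t < T) dKi a b t.
Proof.
elim: T => [|T IH] HT; first by rewrite !big_geq.
rewrite !big_nat_recr //=.
have := K_step a b HT; have := IH (ltnW HT).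
set A := \sum_(0 <= t < T) dKd a b t. set B := \sum_(0 <= t < T) dKi a b t.
rewrite /=; lia.
Qed.

Lemma Kc_Icnt (sg : state K) a b : a <= b ->
  (forall p, 1 <= p <= n -> ~~ (is_tomb (sg p) && (a <= ch (sg p) < b))) ->
  Kc a b sg + Icnt a sg = Icnt b sg.
Proof.
move=> Hab Hnt; rewrite /Kc /Icnt /S1 -big_split /=.
apply: eq_big_nat => p Hp; have := Hnt p Hp.
case: (sg p) => [|k|q] //=.
- by case: (leqP a (h k)); case: (ltnP (h k) b) => //=; lia.
- by case: (leqP a q); case: (ltnP q b) => //=; lia.
Qed.

Lemma NF_diff (sg : state K) a b : 1 <= a <= b -> NFc b sg = NFc a sg + \sum_(a <= p < b) nf (sg p).
Proof.
by move=> Hab; rewrite /NFc (big_cat_nat (n:=a)) //; lia.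
Qed.

Definition F0 a b := \sum_(a <= p < b) is_free (sg0 p).

Lemma nf_free (sg : state K) a b : \sum_(a <= p < b) nf (sg p) + \sum_(a <= p < b) is_free (sg p) = b - a.
Proof.
rewrite -big_split /= (eq_big_nat _ _ (F2 := fun _ => 1)).
  by rewrite sum_nat_const_nat muln1.
by move=> p _; case: is_free.
Qed.

Lemma cross_gain s t w : t < size S -> nth o0 S t = Ins w -> cr s t -> s <= n ->
  h w < s /\
  ((\sum_(0 <= t' < t.+1) dKi (h w) s t')%:Z - (\sum_(0 <= t' < t.+1) dKd (h w) s t')%:Z
   = (cc s t.+1)%:Z - (cc (h w) t.+1)%:Z + (F0 (h w) s)%:Z)%R.
Proof.
move=> Ht Hw Hcr Hsn.
have HI := Inv_t (ltnW Ht).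
have [_ Hi] := run_info Hrun; have := Hi t o0 Ht; rewrite Hw.
move=> [U [Hins HU]].
have [j [k [D HU']]] := insert_spec Hins.
have hw := hr w.
have Hws : h w < s /\ is_true (if st t k is Tomb q then s <= q else s <= k).
  move: Hcr; rewrite /cr Hw HU HU'; case: (st t k) => [|kk|q] /andP[H1 H2] //.
have [Hws1 Hks] := Hws.
have [C1 C2] := ins_cross hr HI D Hws1 Hks.
split => //.
have KT := K_tel (h w) s Ht.
have E1 := Kc_Icnt (ltnW Hws1) (sg := st t.+1) (ltac:(move=> p Hp; apply/negP => /andP[Ht1 /andP[Ha Hb]]; have := C2 p Hp Ht1 Ha; lia)).
have E0 := Kc_Icnt (ltnW Hws1) (sg := sg0) (ltac:(move=> p Hp; move: Hval => [Hnt _ _ _]; by rewrite (negbTE (Hnt p Hp)))).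
have Ys := Y_tel s Ht. have Ya := Y_tel (h w) Ht.
have Ns := NF_diff (st t.+1) (a:=h w) (b:=s) (ltac:(lia)).
have N0 := NF_diff sg0 (a:=h w) (b:=s) (ltac:(lia)).
have Hall : \sum_(h w <= p < s) nf (st t.+1 p) = s - h w.
  rewrite (eq_big_nat _ _ (F2 := fun _ => 1)); first by rewrite sum_nat_const_nat muln1.
  by move=> p Hp; rewrite C1.
have Hfr := nf_free sg0 (h w) s.
move: Ys Ya; rewrite /Y /F0 /cc.
set c1 := \sum_(0 <= t0 < t.+1) cr s t0.
set c2 := \sum_(0 <= t0 < t.+1) cr (h w) t0.
set i1 := \sum_(0 <= t' < t.+1) dKi (h w) s t'.
set d1 := \sum_(0 <= t' < t.+1) dKd (h w) s t'.
move: KT E1 E0 Ns N0 Hall Hfr.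
set x1 := \sum_(h w <= p < s) nf (st t.+1 p).
set x2 := \sum_(h w <= p < s) nf (sg0 p).
set x3 := \sum_(h w <= p < s) is_free (sg0 p).
rewrite -/i1 -/d1.
move=> *; lia.
Qed.

End Main.


Section Ideal.
Variables (K : eqType) (n : nat) (h : K -> nat).
Hypothesis hr : forall k, 1 <= h k <= n.
Variables (sg0 : state K) (S : seq (op K)) (tr : seq (option use)) (o0 : op K).
Hypothesis Hrun : run n h sg0 S = Some tr.
Hypothesis Hval : valid_initial n h sg0.

Definition surp (A : {set 'I_(size S)}) : int :=
  ((#|[set t in A | is_ins (opi t)]|)%:Z - (#|[set t in A | ~~ is_ins (opi t)]|)%:Z)%R.

Lemma card_sum (Q : pred 'I_(size S)) : #|[set t | Q t]| = \sum_(t < size S) Q t.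
Proof.
rewrite -sum1dep_card big_mkcond /=; apply: eq_bigr => i _; by case: (Q i).
Qed.

Lemma opiE (t : 'I_(size S)) : opi t = nth o0 S t.
Proof. by rewrite /opi (tnth_nth o0). Qed.

Lemma sum_prefix (F : nat -> nat) T : T <= size S ->
  \sum_(t < size S) ((t < T) * F t) = \sum_(0 <= t < T) F t.
Proof.
move=> HT; rewrite -(big_mkord xpredT (fun t => (t < T) * F t)).
rewrite (big_cat_nat (n:=T)) //= [X in _ + X]big1_seq ?addn0.
  by apply: eq_big_nat => i Hi; rewrite (_ : i < T) // mul1n.
move=> i /andP[_]; rewrite mem_index_iota => /andP[Hi _].
by rewrite ltnNge Hi.
Qed.

Definition claim s T := exists r (A : {set 'I_(size S)}),
  [/\ 1 <= r <= s, downward_closed h r (s - 1) A,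
      (forall t : 'I_(size S), t \in A -> t < T) &
      ((cc h S tr o0 s T)%:Z + (F0 sg0 r s)%:Z <= surp A)%R].

Lemma surp_set0 : surp set0 = 0%R.
Proof.
rewrite /surp.
have -> : [set t in (set0 : {set 'I_(size S)}) | is_ins (opi t)] = set0.
  by apply/setP => t; rewrite !inE.
have -> : [set t in (set0 : {set 'I_(size S)}) | ~~ is_ins (opi t)] = set0.
  by apply/setP => t; rewrite !inE.
by rewrite cards0.
Qed.

Lemma claim0 s : 1 <= s -> claim s 0.
Proof.
move=> Hs; exists s, set0; split => //.
- by rewrite Hs leqnn.
- apply/andP; split; first by rewrite sub0set.
  by apply/forall_inP => t; rewrite in_set0.
- by move=> t; rewrite in_set0.
- rewrite surp_set0 /cc /F0 !big_geq //.
Qed.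


Lemma surp_U (A B : {set 'I_(size S)}) : (forall t, t \in A -> t \in B -> False) ->
  surp (A :|: B) = (surp A + surp B)%R.
Proof.
move=> Hd; rewrite /surp !card_sum.
have E : forall P : pred 'I_(size S),
    \sum_(t < size S) ((t \in A :|: B) && P t) =
    \sum_(t < size S) ((t \in A) && P t) + \sum_(t < size S) ((t \in B) && P t).
  move=> P; rewrite -big_split /=; apply: eq_bigr => t _; rewrite in_setU.
  case HA: (t \in A); case HB: (t \in B) => //=; last by case: (P t).
  by exfalso; exact: Hd HA HB.
rewrite !E !PoszD; ring.
Qed.

Definition Rset T a s : {set 'I_(size S)} :=
  [set t : 'I_(size S) | (t < T.+1) && (a <= op_hash h (opi t) <= s - 1)].

Lemma surp_R T a s : T < size S -> 1 <= s ->
  surp (Rset T a s) = ((\sum_(0 <= t < T.+1) dKi h S o0 a s t)%:Z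
                       - (\sum_(0 <= t < T.+1) dKd h S o0 a s t)%:Z)%R.
Proof.
move=> HT Hs; rewrite /surp !card_sum.
have Ei : \sum_(t < size S) ((t \in Rset T a s) && is_ins (opi t)) =
          \sum_(0 <= t < T.+1) dKi h S o0 a s t.
  rewrite -sum_prefix //; apply: eq_bigr => t _.
  rewrite inE opiE /dKi.
  case: (t < T.+1) => //=; rewrite mul1n.
  by rewrite (_ : (op_hash h (nth o0 S t) <= s - 1) = (op_hash h (nth o0 S t) < s)) //; lia.
have Ed : \sum_(t < size S) ((t \in Rset T a s) && ~~ is_ins (opi t)) =
          \sum_(0 <= t < T.+1) dKd h S o0 a s t.
  rewrite -sum_prefix //; apply: eq_bigr => t _.
  rewrite inE opiE /dKd.
  case: (t < T.+1) => //=; rewrite mul1n.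
  by rewrite (_ : (op_hash h (nth o0 S t) <= s - 1) = (op_hash h (nth o0 S t) < s)) //; lia.
by rewrite Ei Ed.
Qed.


Lemma SP_in lo hi (t : 'I_(size S)) : (t \in S_P h S lo hi) = (lo <= op_hash h (opi t) <= hi).
Proof. by rewrite inE. Qed.

Lemma claim_all s : 1 <= s <= n -> forall T, T <= size S -> claim s T.
Proof.
elim/ltn_ind: s => s IHs Hs T.
elim: T => [|T IHT] HT; first by apply: claim0; lia.
have [r [A [Hr Hdc Hidx Hsur]]] := IHT (ltnW HT).
case Hc: (cr h S tr o0 s T); last first.
  exists r, A; split => //.
    by move=> t Ht; have := Hidx t Ht; lia.
  by rewrite /cc big_nat_recr //= Hc addn0.
case Ew: (nth o0 S T) => [w|u]; last by move: Hc; rewrite /cr Ew.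
have [Hws Hgain] := cross_gain hr Hrun Hval HT Ew Hc (ltac:(lia)).
have hw := hr w.
have [r' [A' [Hr' Hdc' Hidx' Hsur']]] := IHs (h w) Hws hw (T.+1) HT.
move: Hdc' => /andP[/subsetP Hsub' /forall_inP Hcl'].
have HA'h : forall t, t \in A' -> r' <= op_hash h (opi t) <= h w - 1.
  by move=> t Ht; have := Hsub' t Ht; rewrite SP_in.
exists r', (Rset T (h w) s :|: A'); split.
- lia.
- apply/andP; split.
  + apply/subsetP => t; rewrite in_setU SP_in inE => /orP[/andP[_ H]|H].
      lia.
    have := HA'h t H; lia.
  + apply/forall_inP => t Ht; apply/forall_inP => v Hv; apply/implyP => /andP[Hvt Hth].
    move: Hv; rewrite SP_in => Hv.
    have Ht1 : t < T.+1.
      move: Ht; rewrite in_setU inE => /orP[/andP[H _]|H] //.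
      exact: Hidx' t H.
    rewrite in_setU; case: (leqP (h w) (op_hash h (opi v))) => Hvh.
      by rewrite inE; apply/orP; left; apply/andP; split; lia.
    apply/orP; right.
    have HtA : t \in A'.
      move: Ht; rewrite in_setU inE => /orP[/andP[_ H]|H] //; lia.
    have := Hcl' t HtA => /forall_inP /(_ v) H.
    apply: (implyP (H _)); first by rewrite SP_in; lia.
    by rewrite Hvt Hth.
- move=> t; rewrite in_setU inE => /orP[/andP[H _]|H] //.
  exact: Hidx' t H.
- rewrite surp_U; last first.
    move=> t; rewrite inE => /andP[_ H1] H2; have := HA'h t H2; lia.
  rewrite surp_R //; last lia.
  rewrite Hgain.
  have HF : F0 sg0 r' s = F0 sg0 r' (h w) + F0 sg0 (h w) s.
    by rewrite /F0 (big_cat_nat (n:=h w)) //; lia.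
  move: Hsur'; rewrite HF PoszD.
  set x := surp A'; lia.
Qed.

End Ideal.


Lemma cross_eq (K : eqType) (h : K -> nat) (S : seq (op K)) tr o0 s :
  size tr = size S -> crossing_number h S tr s = cc h S tr o0 s (size S).
Proof.
move=> Hsz; rewrite /crossing_number /cc -sum1_count big_mkcond /=.
rewrite (big_nth (o0, None)) size_zip Hsz minnn.
apply: eq_big_nat => i Hi; by rewrite nth_zip.
Qed.

Lemma F0_count (K : eqType) (sg0 : state K) r s : 1 <= s ->
  count (fun x => is_free (sg0 x)) (iota r ((s - 1).+1 - r)) = F0 sg0 r s.
Proof.
move=> Hs; rewrite (_ : (s - 1).+1 = s); last lia.
rewrite /F0 -sum1_count big_mkcond /=.
by apply: eq_bigr => i _; case: is_free.
Qed.


Local Open Scope ring_scope.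

Theorem mainTheorem7 (K : eqType) (n : nat) (h : K -> nat)
  (sigma0 : nat -> cell K) (S : seq (op K)) (tr : seq (option use)) :
  (forall k, (1 <= h k <= n)%N) ->
  valid_initial n h sigma0 ->
  run n h sigma0 S = Some tr ->
  forall s : nat, (1 <= s <= n)%N ->
  exists r : nat, (1 <= r <= s)%N /\
    ((crossing_number h S tr s)%:Z <= insertion_surplus h S sigma0 r (s - 1))%R.
Proof.
move=> hr Hval Hrun s Hs.
case ES: S Hrun => [|o0 S'] Hrun.
  exists s; split; first lia.
  rewrite /crossing_number /insertion_surplus /=.
  rewrite (_ : ((s - 1).+1 - s)%N = 0%N) /=; last lia.
  have -> : zip [::] tr = [::] by clear Hrun; case: tr.
  rewrite /=; lia.
rewrite -ES in Hrun *.
have [r [A [Hr Hdc Hidx Hsur]]] :=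
  claim_all hr o0 Hrun Hval Hs (T := size S) (leqnn _).
exists r; split => //.
have [Hsz _] := run_info Hrun.
rewrite (@cross_eq K h S tr o0 s Hsz) /insertion_surplus F0_count; last by case/andP: Hs.
have Hm : (set_surplus A <= max_surplus h S r (s - 1))%N.
  by apply: (leq_bigmax_cond (P := fun A => downward_closed h r (s - 1) A)).
move: Hsur Hm; rewrite /surp /set_surplus.
set a := #|_|. set b := #|_|. set c := cc _ _ _ _ _ _. set f := F0 _ _ _.
set M := max_surplus _ _ _ _.
move=> *; lia.
Qed.
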